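(* Let $\mathbb K\in\{\mathbb R,\mathbb C\}$, $\Omega=\mathbb K^{\mathbb Z_+}$, let $\mu=\bigotimes_{n\ge0}\mu_n$ be a product of Borel probability measures $\mu_n$ on $\mathbb K$, and let $\mathbf w=(w_n)_{n\ge1}$ be a sequence of non-zero scalars. Then $\mu$ is $B_{\mathbf w}$-invariant if and only if for every $n\ge1$ and every Borel set $A\subseteq\mathbb K$, $\mu_n(A)=\mu_0(w_1\cdots w_nA)$ (i.e. $\mu_n$ is the image of $\mu_0$ under $t\mapsto t/(w_1\cdots w_n)$).
   Context: $\Omega$ carries the product topology and its Borel $\sigma$-algebra. $B_{\mathbf w}:\Omega\to\Omega$ is defined by $(B_{\mathbf w}t)_j=w_{j+1}t_{j+1}$ for $j\ge0$, where $t=(t_j)_{j\ge0}$. Invariance means $\mu(B_{\mathbf w}^{-1}(B))=\mu(B)$ for all Borel $B\subseteq\Omega$. *)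

(* Defs.v *)
(* K ranges over R (a realType) and
   C = R[i] (mathcomp-real-closed complex numbers over R). *)
From HB Require Import structures.
From mathcomp Require Import all_boot all_order all_algebra.
From mathcomp Require Import all_classical all_reals all_analysis.
From mathcomp.real_closed Require Import complex.
Import Order.TTheory GRing.Theory Num.Theory.
Local Open Scope ring_scope.
Local Open Scope classical_set_scope.

(* A copy of the scalar field K equipped with a point (needed to build the
   generated sigma-algebra). *)
Definition scal (K : numFieldType) : Type := K.
HB.instance Definition _ (K : numFieldType) := Choice.on (scal K).
HB.instance Definition _ (K : numFieldType) := isPointed.Build (scal K) (0 : K).

Definition Kopen (K : numFieldType) (A : set (scal K)) : Prop :=
  forall x : K, A x -> exists2 e : K, 0 < e & forall y : K, `|y - x| < e -> A y.

(* Open sets of Omega = K^{Z_+} for the product topology: a set is open iff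
   around each of its points it contains a basic cylinder neighbourhood
   {s | |s_i - t_i| < e for all i < N}. *)
Definition Omega_open (K : numFieldType) (U : set (nat -> scal K)) : Prop :=
  forall t : nat -> K, U t -> exists N : nat, exists2 e : K, 0 < e &
    forall s : nat -> K, (forall i, (i < N)%N -> `|s i - t i| < e) -> U s.

Notation KBorel K := (g_sigma_algebraType (@Kopen K)).
Notation OmegaBorel K := (g_sigma_algebraType (@Omega_open K)).

Definition Bw (K : numFieldType) (w : nat -> K) (t : nat -> K) : nat -> K :=
  fun j => w j.+1 * t j.+1.

(* mu is the product measure (x)_n mu_n: it is a probability measure on
   the Borel sets of Omega giving every measurable cylinder
   A_0 x ... x A_{N-1} x K x K x ... the mass prod_{i<N} mu_i(A_i)
   (this determines mu uniquely on the Borel sigma-algebra). *)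
Definition is_product_measure (R : realType) (K : numFieldType)
    (mu : probability (OmegaBorel K) R) (mun : nat -> probability (KBorel K) R)
    : Prop :=
  forall (N : nat) (A : nat -> set (KBorel K)),
    (forall i, (i < N)%N -> measurable (A i)) ->
    mu [set t : OmegaBorel K | forall i, (i < N)%N -> A i (t i)] =
    (\prod_(i < N) mun i (A i))%E.

Definition Bw_invariant (R : realType) (K : numFieldType) (w : nat -> K)
    (mu : probability (OmegaBorel K) R) : Prop :=
  forall B : set (OmegaBorel K), measurable B ->
    mu ((@Bw K w) @^-1` B) = mu B.

Definition lemma5p2_for (R : realType) (K : numFieldType) : Prop :=
  forall (mun : nat -> probability (KBorel K) R)
         (mu : probability (OmegaBorel K) R) (w : nat -> K),
    (forall n, (1 <= n)%N -> w n != 0) ->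
    @is_product_measure R K mu mun ->
    (@Bw_invariant R K w mu <->
     forall n, (1 <= n)%N -> forall A : set (KBorel K), measurable A ->
       mun n A = mun 0%N [set (\prod_(1 <= k < n.+1) w k) * a | a in A]).

(* Main.v *)
Require Import Defs.
From HB Require Import structures.
From mathcomp Require Import all_boot all_order all_algebra.
From mathcomp Require Import all_classical all_reals all_analysis.
From mathcomp.real_closed Require Import complex.
From mathcomp Require Import lra.
Import Order.TTheory GRing.Theory Num.Theory.
Local Open Scope ring_scope.
Local Open Scope classical_set_scope.
Section Generic.
Variable K : numFieldType.

Lemma scale_mfun (c : K) :
  measurable_fun setT (fun x : KBorel K => (c * x : KBorel K)).
Proof.
apply: (@measurability _ _ (KBorel K) (KBorel K) setT _ (@Kopen K)) => //.
move=> _ [A KA <-]; apply: sub_sigma_algebra; rewrite setTI.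
move=> x /= Ax; have [e e0 He] := KA _ Ax.
have [c0|c0] := eqVneq c 0.
  by exists 1 => // y _; rewrite c0 mul0r -(mul0r x) -c0.
  
exists (e / `|c|); first by rewrite divr_gt0 // normr_gt0.
move=> y hy; apply: He; rewrite -mulrBr normrM.
have cp : 0 < `|c| by rewrite normr_gt0.
by rewrite -(ltr_pM2l cp) in hy; rewrite (lt_le_trans hy) // mulrC divfK // normr_eq0.
Qed.

Lemma proj_mfun (i : nat) :
  measurable_fun setT (fun t : OmegaBorel K => (t i : KBorel K)).
Proof.
apply: (@measurability _ _ (OmegaBorel K) (KBorel K) setT _ (@Kopen K)) => //.
move=> _ [A KA <-]; apply: sub_sigma_algebra; rewrite setTI.
move=> t /= At; have [e e0 He] := KA _ At.
exists i.+1, e => // s hs; apply: He; exact: hs.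
Qed.

Lemma bound_exists (f : nat -> K) (N : nat) :
  exists2 M : K, 0 < M & forall j, (j < N)%N -> `|f j| <= M.
Proof.
elim: N => [|N [M M0 HM]]; first by exists 1.
exists (M + `|f N|); first by rewrite ltr_wpDr.
move=> j; rewrite ltnS leq_eqVlt => /orP[/eqP->|jN].
  by rewrite lerDr ltW.
by rewrite (le_trans (HM _ jN)) // lerDl.
Qed.

Lemma Bw_mfun (w : nat -> K) :
  measurable_fun setT (@Bw K w : OmegaBorel K -> OmegaBorel K).
Proof.
apply: (@measurability _ _ (OmegaBorel K) (OmegaBorel K) setT _ (@Omega_open K)) => //.
move=> _ [U KU <-]; apply: sub_sigma_algebra; rewrite setTI.
move=> t /= Ut; have [N [e e0 He]] := KU _ Ut.
have [M M0 HM] := bound_exists w N.+1.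
exists N.+1, (e / M); first by rewrite divr_gt0.
move=> s hs; apply: He => i iN; rewrite /Bw -mulrBr normrM.
have h1 := hs i.+1 iN.
have h2 := HM i.+1 iN.
apply: (le_lt_trans (y := M * `|s i.+1 - t i.+1|)).
  by rewrite ler_wpM2r.
by rewrite -(ltr_pM2l M0) in h1; rewrite (lt_le_trans h1) // mulrC divfK // gt_eqF.
Qed.

Definition cyl (N : nat) (A : nat -> set (KBorel K)) : set (OmegaBorel K) :=
  [set t | forall i, (i < N)%N -> A i (t i)].

Definition Dcyl : set (set (OmegaBorel K)) :=
  [set C | exists N A, (forall i, (i < N)%N -> measurable (A i)) /\ C = cyl N A].

Lemma cyl0 A : cyl 0 A = setT.
Proof. by apply/seteqP; split => t //= _ i; rewrite ltn0. Qed.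

Lemma cyl_measurable N A : (forall i, (i < N)%N -> measurable (A i)) ->
  measurable (cyl N A).
Proof.
elim: N => [|N IH] hA; first by rewrite cyl0.
have -> : cyl N.+1 A = cyl N A `&` ((fun t : OmegaBorel K => (t N : KBorel K)) @^-1` A N).
  apply/seteqP; split => t /=.
    by move=> h; split => [i iN|]; apply: h => //; apply: ltnW.
  by move=> [h1 h2] i; rewrite ltnS leq_eqVlt => /orP[/eqP->//|]; apply: h1.
apply: measurableI; first by apply: IH => i iN; apply: hA; apply: ltnW.
have := proj_mfun N measurableT _ (hA N (ltnSn N)); by rewrite setTI.
Qed.

Lemma Dcyl_measurable : Dcyl `<=` measurable.
Proof. by move=> _ [N [A [hA ->]]]; apply: cyl_measurable. Qed.

Lemma Dcyl_setI : setI_closed Dcyl.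
Proof.
move=> _ _ [N1 [A1 [h1 ->]]] [N2 [A2 [h2 ->]]].
exists (maxn N1 N2), (fun i => (if (i < N1)%N then A1 i else setT) `&`
   (if (i < N2)%N then A2 i else setT)); split.
  move=> i _; apply: measurableI.
    by case: ifP => // /h1.
  by case: ifP => // /h2.
apply/seteqP; split => t /=.
  move=> [H1 H2] i _; split.
    by case: ifP => // /H1.
  by case: ifP => // /H2.
move=> H; split => i iN.
  by have [+ _] := H i (leq_trans iN (leq_maxl _ _)); rewrite iN.
by have [_ +] := H i (leq_trans iN (leq_maxr _ _)); rewrite iN.
Qed.

Definition Kball (c r : K) : set (KBorel K) := [set y : K | `|y - c| < r].

Lemma Kball_measurable c r : measurable (Kball c r).
Proof.
apply: sub_sigma_algebra => y /= hy.
exists (r - `|y - c|); first by rewrite subr_gt0.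
move=> z hz; rewrite /Kball /=.
apply: (le_lt_trans (ler_distD y z c)).
by rewrite -ltrBrDr.
Qed.

Lemma opens_sigmaD (d : nat -> K) :
  (forall x e : K, 0 < e -> exists n, `|x - d n| < e) ->
  @Omega_open K `<=` <<s Dcyl >>.
Proof.
move=> hd U hU.
pose C (c : nat * seq nat * nat) : set (OmegaBorel K) :=
  cyl c.1.1 (fun i => Kball (d (nth 0%N c.1.2 i)) `|d c.2|).
pose F (n : nat) : set (OmegaBorel K) :=
  match unpickle n with
  | Some c => if `[< C c `<=` U >] then C c else set0
  | None => set0 end.
have -> : U = \bigcup_n F n.
  apply/seteqP; split; last first.
    move=> t [n _]; rewrite /F; case: (unpickle n) => [c|//].
    by case: asboolP => // h /h.
  move=> t Ut; have [N [e e0 He]] := hU t Ut.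
  pose e4 := e / 2%:R / 2%:R.
  have e4p : 0 < e4 by rewrite !divr_gt0.
  have [m hm] := hd e4 e4 e4p.
  pose r := `|d m|.
  have rpos : 0 < r.
    have h1 := ler_distD (d m) e4 0.
    rewrite !subr0 (gtr0_norm e4p) in h1.
    have h2 : e4 < e4 + r by apply: (le_lt_trans h1); rewrite ltrD2r.
    by rewrite ltrDl in h2.
  have r2 : r + r < e.
    have h1 := ler_distD e4 (d m) 0.
    rewrite !subr0 (gtr0_norm e4p) distrC in h1.
    have h2 : r < e / 2%:R by rewrite (le_lt_trans h1) // [X in _ < X](splitr (e / 2%:R)) ltrD2r.
    by rewrite [X in _ < X](splitr e) ltrD.
  have [p hp] := choice (fun i => hd (t i) r rpos).
  pose c := (N, map p (iota 0 N), m).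
  have tC : C c t.
    move=> i iN /=; rewrite /Kball /= (nth_map 0%N) ?size_iota // nth_iota //.
    all: try exact: hp.
  have CU : C c `<=` U.
    move=> s sC; apply: He => i iN.
    apply: (le_lt_trans (ler_distD (d (p i)) _ _)).
    have := sC i iN; rewrite /Kball /= (nth_map 0%N) ?size_iota // nth_iota // => h.
    by apply: (lt_trans _ r2); apply: ltrD => //; rewrite distrC; apply: hp.
  exists (pickle c) => //; rewrite /F pickleK.
  by case: asboolP.
apply: sigma_algebra_bigcup => n; rewrite /F.
case: (unpickle n) => [c|]; last exact: sigma_algebra0.
case: asboolP => _; last exact: sigma_algebra0.
apply: sub_sigma_algebra; exists c.1.1, (fun i => Kball (d (nth 0%N c.1.2 i)) `|d c.2|).
by split => // i _; apply: Kball_measurable.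
Qed.

End Generic.
Section Main.
Variables (R : realType) (K : numFieldType).

Lemma L1 (w : K) (A : set (KBorel K)) : w != 0 ->
  (fun x : KBorel K => (w * x : KBorel K)) @^-1` [set w * a | a in A] = A.
Proof.
move=> w0; apply/seteqP; split => x /=.
  by move=> [a Aa /(mulfI w0) <-].
by move=> Ax; exists x.
Qed.

Lemma L2 (c w : K) (A : set (KBorel K)) :
  [set c * b | b in [set w * a | a in A]] = [set (c * w) * a | a in A] :> set (KBorel K).
Proof.
apply/seteqP; split => x /=.
  by move=> [_ [a Aa <-] <-]; exists a => //; rewrite mulrA.
by move=> [a Aa <-]; exists (w * a); [exists a|rewrite mulrA].
Qed.

Lemma L3 (c w : K) (A : set (KBorel K)) : w != 0 ->
  [set (c * w) * a | a in (fun x : KBorel K => (w * x : KBorel K)) @^-1` A]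
  = [set c * a | a in A] :> set (KBorel K).
Proof.
move=> w0; apply/seteqP; split => x /=.
  by move=> [a Aa <-]; exists (w * a) => //; rewrite mulrA.
move=> [a Aa <-]; exists (w^-1 * a); first by rewrite /= mulVKf.
by rewrite -mulrA mulVKf.
Qed.

Lemma L4 (c : K) (A : set (KBorel K)) : c != 0 ->
  [set c * a | a in A] = (fun x : KBorel K => (c^-1 * x : KBorel K)) @^-1` A.
Proof.
move=> c0; apply/seteqP; split => x /=.
  by move=> [a Aa <-]; rewrite mulKf.
by move=> Ax; exists (c^-1 * x) => //; rewrite mulrA divff // mul1r.
Qed.

Lemma L5 (A : set (KBorel K)) : [set 1 * a | a in A] = A :> set (KBorel K).
Proof.
apply/seteqP; split => x /=.
  by move=> [a Aa <-]; rewrite mul1r.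
by move=> Ax; exists x => //; rewrite mul1r.
Qed.

Lemma image_measurable (c : K) (A : set (KBorel K)) : c != 0 -> measurable A ->
  measurable ([set c * a | a in A] : set (KBorel K)).
Proof.
move=> c0 mA; rewrite L4 //.
by have := scale_mfun _ c^-1 measurableT _ mA; rewrite setTI.
Qed.

Lemma pre_measurable (c : K) (A : set (KBorel K)) : measurable A ->
  measurable ((fun x : KBorel K => (c * x : KBorel K)) @^-1` A).
Proof. by move=> mA; have := scale_mfun _ c measurableT _ mA; rewrite setTI. Qed.

Lemma prod_single (mun : nat -> probability (KBorel K) R) n (A : set (KBorel K)) :
  (\prod_(i < n.+1) mun i (if (i == n :> nat) then A else setT))%E = mun n A.
Proof.
rewrite big_ord_recr /= eqxx big1 ?mul1e // => i _.
by rewrite (ltn_eqF (ltn_ord i)) probability_setT.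
Qed.


Lemma mOmega (d : nat -> K) :
  (forall x e : K, 0 < e -> exists n, `|x - d n| < e) ->
  @measurable _ (OmegaBorel K) = <<s Dcyl K >>.
Proof.
move=> hd; apply/seteqP; split.
  apply: smallest_sub; first exact: smallest_sigma_algebra.
  exact: (@opens_sigmaD K d hd).
apply: smallest_sub; first exact: sigma_algebra_measurable.
exact: Dcyl_measurable.
Qed.

Theorem main_gen (d : nat -> K) :
  (forall x e : K, 0 < e -> exists n, `|x - d n| < e) -> lemma5p2_for R K.
Proof.
move=> hd mun mu w w0 hprod.
pose S n (A : set (KBorel K)) : set (OmegaBorel K) := [set t | A (t n)].
have Scyl n A : S n A = cyl K n.+1 (fun i => if i == n then A else setT).
  apply/seteqP; split => t /=.
    by move=> h i _; case: eqP => // ->.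
  by move=> h; have := h n (ltnSn n); rewrite eqxx.
have mS n A : measurable A -> measurable (S n A).
  by move=> mA; rewrite Scyl; apply: cyl_measurable => i _; case: ifP.
have muS n A : measurable A -> mu (S n A) = mun n A.
  move=> mA; rewrite Scyl /cyl (hprod n.+1 (fun i => if i == n then A else setT)) ?prod_single // => i _; by case: ifP.
have wn0 n : w n.+1 != 0 by apply: w0.
pose c n := \prod_(1 <= k < n.+1) w k.
have cS n : c n.+1 = c n * w n.+1 by rewrite /c big_nat_recr.
have c0 : c 0%N = 1 by rewrite /c big_geq.
have key : (forall n A, measurable A ->
     mun n.+1 ((fun x : KBorel K => (w n.+1 * x : KBorel K)) @^-1` A) = mun n A) <->
   (forall n A, measurable A -> mun n A = mun 0%N [set c n * a | a in A]).
  split.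
    move=> Q; elim => [|n IH] A mA; first by rewrite c0 L5.
    have mA1 := image_measurable _ _ (wn0 n) mA.
    transitivity (mun n.+1 ((fun x : KBorel K => (w n.+1 * x : KBorel K)) @^-1`
                     [set w n.+1 * a | a in A])); first by rewrite L1.
    by rewrite Q // IH // L2 -cS.
  move=> H n A mA.
  apply: eq_trans (H _ _ (pre_measurable _ _ mA)) _.
  apply: eq_trans _ (esym (H n A mA)).
  by rewrite cS L3.
split.
  move=> inv.
  have Q : forall n A, measurable A ->
     mun n.+1 ((fun x : KBorel K => (w n.+1 * x : KBorel K)) @^-1` A) = mun n A.
    move=> n A mA.
    rewrite -(muS n.+1 _ (pre_measurable _ _ mA)) -(muS n A mA) -(inv _ (mS n A mA)).
    by [].
  by move/key: Q => H n _ A mA; exact: H.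
move=> H0.
have H : forall n A, measurable A -> mun n A = mun 0%N [set c n * a | a in A].
  by case => [|n] A mA; [rewrite c0 L5 | exact: H0].
have Q := (proj2 key) H.
have mBw := Bw_mfun _ w.
pose nu : {measure set (OmegaBorel K) -> \bar R} := pushforward mu (@Bw K w : OmegaBorel K -> OmegaBorel K).
have g1 : forall i : nat, Dcyl K ((fun _ => setT) i).
  by move=> _; exists 0%N, (fun _ => setT); split => //; rewrite cyl0.
have g2 : \bigcup_(k : nat) (fun _ => setT) k = [set: OmegaBorel K].
  by apply/seteqP; split => // t _; exists 0%N.
have g4 : forall k : nat, (mu ((fun _ => setT) k) < +oo)%E.
  by move=> _; rewrite probability_setT ltry.
have g3 : forall A, Dcyl K A -> mu A = nu mBw A.
  move=> _ [N [A [hA ->]]].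
  rewrite /nu /pushforward /=.
  pose A' i : set (KBorel K) := if i is j.+1 then
     (fun x : KBorel K => (w j.+1 * x : KBorel K)) @^-1` A j else setT.
  change (mu (cyl K N A) = mu (@Bw K w @^-1` cyl K N A)).
  have -> : @Bw K w @^-1` cyl K N A = cyl K N.+1 A'.
    apply/seteqP; split => t /=.
      by move=> h [|i] //= iN; apply: h.
    by move=> h i iN; exact: (h i.+1 iN).
  rewrite /cyl (hprod N A hA) (hprod N.+1 A'); last first.
    by case => [|i] //= iN; apply: pre_measurable; apply: hA.
  rewrite big_ord_recl /= probability_setT mul1e.
  apply: eq_bigr => i _; rewrite /A' /= /bump /= add0n; exact: (esym (Q i (A i) (hA i (ltn_ord i)))).
move=> B mB.
have := measure_unique (Dcyl K) (fun _ => setT) (mOmega _ hd) (@Dcyl_setI K) g1 g2 mu (nu mBw) g3 g4 B mB.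
by move=> ->.
Qed.

End Main.
Lemma sepR (R : realType) :
  exists d : nat -> R, forall x e : R, 0 < e -> exists n, `|x - d n| < e.
Proof.
exists (fun n => if @unpickle rat n is Some q then ratr q else 0).
move=> x e e0.
have [q hq] := @rat_in_itvoo R (x - e) (x + e) ltac:(lra).
exists (pickle q); rewrite pickleK ltr_distlC.
by move: hq; rewrite in_itv.
Qed.

Lemma sepC (R : realType) :
  exists d : nat -> R[i], forall x e : R[i], 0 < e -> exists n, `|x - d n| < e.
Proof.
exists (fun n => if @unpickle (rat * rat)%type n is Some (a, b) then (ratr a +i* ratr b)%C else 0).
move=> [xr xi] [er ei]; rewrite ltcE /= => /andP[/eqP ei0 er0].
have [a] := @rat_in_itvoo R (xr - er/4) (xr + er/4) ltac:(lra).
rewrite in_itv /= => /andP[ha1 ha2].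
have [b] := @rat_in_itvoo R (xi - er/4) (xi + er/4) ltac:(lra).
rewrite in_itv /= => /andP[hb1 hb2].
exists (pickle (a, b)); rewrite pickleK ei0 complexr0.
rewrite normc_def /= ltcR.
rewrite -[X in _ < X](@ger0_norm _ er) ?ltW // -sqrtr_sqr ltr_sqrt ?exprn_gt0 //.
have hu : (xr - ratr a) ^+ 2 < (er / 4) ^+ 2.
  have h1 : 0 < er / 4 - (xr - ratr a) by lra.
  have h2 : 0 < er / 4 + (xr - ratr a) by lra.
  have := mulr_gt0 h1 h2; rewrite !expr2; lra.
have hv : (xi - ratr b) ^+ 2 < (er / 4) ^+ 2.
  have h1 : 0 < er / 4 - (xi - ratr b) by lra.
  have h2 : 0 < er / 4 + (xi - ratr b) by lra.
  have := mulr_gt0 h1 h2; rewrite !expr2; lra.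
have : (er / 4) ^+ 2 + (er / 4) ^+ 2 < er ^+ 2.
  rewrite !expr2; nra.
lra.
Qed.

Theorem lemma5p2 (R : realType) :
  lemma5p2_for R R /\ lemma5p2_for R (R[i])%C.
Proof.
split.
  by have [d hd] := sepR R; exact: (@main_gen R _ d hd).
by have [d hd] := sepC R; exact: (@main_gen R _ d hd).
Qed.
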